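(* Fix a subject entity $s$ and a finite set $E$ of candidate events for $s$, and define for $T\subseteq E$ $$\mathrm{Rel}(s,T)=\lambda\,\mathrm{ERel}(s,T)+(1-\lambda)\,\mathrm{DRel}(s,T),$$ where $$\mathrm{ERel}(s,T)=w^e_1\,\mathrm{E2E}(s,T)+w^e_2\,\mathrm{E2EPath}(T)+w^e_3\,\mathrm{G2E}(T),\qquad \mathrm{DRel}(s,T)=w^d_1\,\mathrm{E2D}(s,T)+w^d_2\,\mathrm{E2DPath}(T),$$ with $$\mathrm{E2E}(s,T)=\sum_{re\in\{\mathrm{RE}(e)\,:\,e\in T\}}\mathrm{E2ECooc}(s,re),\qquad \mathrm{G2E}(T)=\sum_{re\in\{\mathrm{RE}(e)\,:\,e\in T\}}\mathrm{GlobalImportance}(re),$$ $$\mathrm{E2EPath}(T)=\sum_{p\in\{\pi_{RE}(e)\,:\,e\in T\}}\ \operatorname*{average}_{e\in\mathcal{E},\ \pi_{RE}(e)=p}\mathrm{E2ECooc}(\mathrm{Sub}(e),\mathrm{RE}(e)),$$ $$\mathrm{E2D}(s,T)=\sum_{t\in\{\tau(e)\,:\,e\in T\}}\mathrm{E2DCooc}(s,t),\qquad \mathrm{E2DPath}(T)=\sum_{p\in\{\pi_{\tau}(e)\,:\,e\in T\}}\ \operatorname*{average}_{e\in\mathcal{E},\ \pi_{\tau}(e)=p}\mathrm{E2DCooc}(\mathrm{Sub}(e),\tau(e)),$$ where $0\le\lambda\le 1$ and $w^e_1,w^e_2,w^e_3,w^d_1,w^d_2\ge 0$. Then $f(T)=\mathrm{Rel}(s,T)$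 is a monotone submodular set function $f:2^E\to\mathbb{R}_{\ge 0}$.
   Context: Events: $\mathcal{E}$ is the (finite) set of all events over all subjects in a knowledge base, and $E\subseteq\mathcal{E}$ is the set of candidate events of the subject $s$. Each event $e$ has a subject $\mathrm{Sub}(e)$ (with $\mathrm{Sub}(e)=s$ for $e\in E$), a related entity $\mathrm{RE}(e)$, a timestamp $\tau(e)\in\mathbb{R}$, an entity path $\pi_{RE}(e)$ and a time path $\pi_\tau(e)$ (labels drawn from some set of path types). The sums range over sets (not multisets), so each distinct related entity, timestamp, or path is counted once. $\mathrm{E2ECooc}(x,y)$ and $\mathrm{E2DCooc}(x,t)$ are nonnegative real-valued co-occurrence scores between entities (resp. an entity and a date) — in the paper, normalized pointwise mutual information computed from web co-occurrence, with only positive values retained — and $\mathrm{GlobalImportance}(re)\ge 0$ is a nonnegative score of an entity (the fraction of search queries mentioning it). A set function $f$ on $2^E$ is submodular if $f(A\cup\{e\})-f(A)\ge f(B\cup\{e\})-f(B)$ for all $A\subseteq B\subseteq E$ and $e\in E\setminus B$, and monotone if $f(A)\le f(B)$ whenever $A\subseteq B$. *)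

(* Defs.v *)
From HB Require Import structures.
From mathcomp Require Import all_boot all_order all_algebra.
Set Implicit Arguments. Unset Strict Implicit. Unset Printing Implicit Defensive.
Import Order.TTheory GRing.Theory Num.Theory.
Local Open Scope ring_scope.

Section Rel.
Variables (R : realFieldType) (Ev : finType) (Ent P : eqType).

Definition img (A : eqType) (g : Ev -> A) (T : {set Ev}) : seq A :=
  undup [seq g e | e <- enum T].

Definition path_avg (pi : Ev -> P) (c : Ev -> R) (p : P) : R :=
  (\sum_(e | pi e == p) c e) / #|[set e | pi e == p]|%:R.

Variables (Sub RE : Ev -> Ent) (tau : Ev -> R) (piRE pitau : Ev -> P)
  (E2ECooc : Ent -> Ent -> R) (E2DCooc : Ent -> R -> R) (GI : Ent -> R).

Definition E2E (s : Ent) (T : {set Ev}) : R :=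
  \sum_(re <- img RE T) E2ECooc s re.
Definition G2E (T : {set Ev}) : R := \sum_(re <- img RE T) GI re.
Definition E2EPath (T : {set Ev}) : R :=
  \sum_(p <- img piRE T) path_avg piRE (fun e => E2ECooc (Sub e) (RE e)) p.
Definition E2D (s : Ent) (T : {set Ev}) : R :=
  \sum_(t <- img tau T) E2DCooc s t.
Definition E2DPath (T : {set Ev}) : R :=
  \sum_(p <- img pitau T) path_avg pitau (fun e => E2DCooc (Sub e) (tau e)) p.

Definition ERel (we1 we2 we3 : R) (s : Ent) (T : {set Ev}) : R :=
  we1 * E2E s T + we2 * E2EPath T + we3 * G2E T.
Definition DRel (wd1 wd2 : R) (s : Ent) (T : {set Ev}) : R :=
  wd1 * E2D s T + wd2 * E2DPath T.
Definition Rel (lam we1 we2 we3 wd1 wd2 : R) (s : Ent) (T : {set Ev}) : R :=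
  lam * ERel we1 we2 we3 s T + (1 - lam) * DRel wd1 wd2 s T.
End Rel.

Definition monotone_on (R : realFieldType) (Ev : finType) (E : {set Ev})
  (f : {set Ev} -> R) : Prop :=
  forall A B : {set Ev}, A \subset B -> B \subset E -> f A <= f B.

Definition submodular_on (R : realFieldType) (Ev : finType) (E : {set Ev})
  (f : {set Ev} -> R) : Prop :=
  forall (A B : {set Ev}) (e : Ev), A \subset B -> B \subset E ->
    e \in E -> e \notin B ->
    f (e |: B) - f B <= f (e |: A) - f A.

(* Main.v *)
Require Import Defs.
From mathcomp Require Import all_boot all_order all_algebra.
From mathcomp Require Import lra.
Import Order.TTheory GRing.Theory Num.Theory.
Local Open Scope ring_scope.
Set Implicit Arguments. Unset Strict Implicit.

Section Aux.
Variables (R : realFieldType) (Ev : finType).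

Definition good (F : {set Ev} -> R) : Prop :=
  (forall T, 0 <= F T) /\ (forall A B : {set Ev}, A \subset B -> F A <= F B) /\
  (forall (A B : {set Ev}) (e : Ev), A \subset B -> e \notin B -> F (e |: B) - F B <= F (e |: A) - F A).

Lemma good_add F G : good F -> good G -> good (fun T => F T + G T).
Proof.
move=> [F0 [F1 F2]] [G0 [G1 G2]]; split; first by move=> T; rewrite addr_ge0.
split; first by move=> A B AB; rewrite lerD ?F1 ?G1.
move=> A B e AB eB.
have H1 := F2 A B e AB eB; have H2 := G2 A B e AB eB.
move: H1 H2; set a := F _; set b := F _; set c := F _; set d := F _.
set a' := G _; set b' := G _; set c' := G _; set d' := G _. lra.
Qed.

Lemma good_scale c F : 0 <= c -> good F -> good (fun T => c * F T).
Proof.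
move=> c0 [F0 [F1 F2]]; split; first by move=> T; rewrite mulr_ge0.
split; first by move=> A B AB; rewrite ler_wpM2l ?F1.
by move=> A B e AB eB; rewrite -!mulrBr ler_wpM2l ?F2.
Qed.

Variable (A : eqType) (g : Ev -> A) (w : A -> R).
Hypothesis w0 : forall a, 0 <= w a.

Lemma mem_img (a : A) (T : {set Ev}) : (a \in img g T) = [exists x in T, g x == a].
Proof.
rewrite mem_undup; apply/mapP/existsP => [[x]|[x /andP[xT /eqP <-]]].
  by rewrite mem_enum => xT ->; exists x; rewrite xT eqxx.
by exists x; rewrite ?mem_enum.
Qed.

Lemma img_mono (a : A) (S T : {set Ev}) : S \subset T -> a \in img g S -> a \in img g T.
Proof.
rewrite !mem_img => /subsetP ST /existsP[x /andP[xS xa]].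
by apply/existsP; exists x; rewrite ST.
Qed.

Lemma img_U1 (a : A) (e : Ev) (T : {set Ev}) : (a \in img g (e |: T)) = (a == g e) || (a \in img g T).
Proof.
rewrite !mem_img; apply/existsP/orP => [[x /andP[]]|].
  rewrite in_setU1 => /orP[/eqP -> /eqP ->|xT xa]; first by left.
  by right; apply/existsP; exists x; rewrite xT.
case=> [/eqP ->|/existsP[x /andP[xT xa]]].
  by exists e; rewrite setU11 eqxx.
by exists x; rewrite in_setU1 xT orbT.
Qed.

Definition U := undup [seq g e | e <- enum Ev].

Lemma covE (T : {set Ev}) : \sum_(a <- img g T) w a =
  \sum_(a <- U) (if a \in img g T then w a else 0).
Proof.
rewrite -big_mkcond -big_filter; apply: perm_big; apply: uniq_perm.
- exact: undup_uniq.
- by rewrite filter_uniq ?undup_uniq.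
move=> a; rewrite mem_filter; case aT: (a \in img g T) => //=.
move: aT; rewrite mem_img => /existsP[x /andP[_ /eqP <-]].
by rewrite /U mem_undup; apply/esym; apply: map_f; rewrite mem_enum.
Qed.

Lemma good_cov : good (fun T => \sum_(a <- img g T) w a).
Proof.
split; first by move=> T; rewrite big_seq_cond sumr_ge0.
split.
  move=> S T ST; rewrite !covE; apply: ler_sum => a _.
  case aS: (a \in img g S); first by rewrite (img_mono ST aS).
  by case: ifP.
move=> S T e ST eT; rewrite !covE -!sumrB; apply: ler_sum => a _.
rewrite !img_U1.
case aT: (a \in img g T).
  rewrite orbT subrr; case: (a \in img g S); case: (a == g e) => /=;
  by rewrite ?subrr ?subr0 ?w0.
have aS : (a \in img g S) = false.
  by apply/negbTE/negP => /(img_mono ST); rewrite aT.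
rewrite aS !orbF; by case: (a == g e) => /=; rewrite ?subr0.
Qed.
End Aux.

Theorem theorem1 (R : realFieldType) (Ev : finType) (Ent P : eqType)
  (Sub RE : Ev -> Ent) (tau : Ev -> R) (piRE pitau : Ev -> P)
  (E2ECooc : Ent -> Ent -> R) (E2DCooc : Ent -> R -> R) (GI : Ent -> R)
  (s : Ent) (E : {set Ev})
  (lam we1 we2 we3 wd1 wd2 : R) :
  (forall e, e \in E -> Sub e = s) ->
  (forall x y, 0 <= E2ECooc x y) ->
  (forall x t, 0 <= E2DCooc x t) ->
  (forall x, 0 <= GI x) ->
  0 <= lam -> lam <= 1 ->
  0 <= we1 -> 0 <= we2 -> 0 <= we3 -> 0 <= wd1 -> 0 <= wd2 ->
  let f := Rel Sub RE tau piRE pitau E2ECooc E2DCooc GI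
             lam we1 we2 we3 wd1 wd2 s in
  (forall T : {set Ev}, T \subset E -> 0 <= f T) /\
  monotone_on E f /\ submodular_on E f.
Proof.
move=> _ C1 C2 C3 l0 l1 e1 e2 e3 d1 d2 f.
have pa (pi : Ev -> P) (c : Ev -> R) : (forall e, 0 <= c e) ->
    forall p, 0 <= path_avg pi c p.
  by move=> c0 p; rewrite /path_avg divr_ge0 // sumr_ge0.
have l1' : 0 <= 1 - lam by rewrite subr_ge0.
have G : good f.
  rewrite /f /Rel /ERel /DRel /E2E /G2E /E2EPath /E2D /E2DPath.
  apply: good_add; apply: good_scale => //.
    apply: good_add; [apply: good_add|]; apply: good_scale => //;
      apply: good_cov => //; exact: pa.
  apply: good_add; apply: good_scale => //; apply: good_cov => //; exact: pa.
case: G => [G0 [G1 G2]]; split; first by move=> T _; exact: G0.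
by split; [move=> A B AB _; exact: G1 | move=> A B e AB _ _ eB; exact: G2].
Qed.
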